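(* Let $1\le k\le m$ and let $\phi_{m,k}$ be the automorphism of the free group $F(A_1,\dots,A_m,B_1,\dots,B_k)$ described below. Then the largest Jordan block in the Jordan normal form of each of the induced automorphisms $\phi_{m,k}^{ab}$ and $(\phi_{m,k}^{-1})^{ab}$ of $\mathbb Z^{m+k}$ has size $k+1$.
   Context: $\phi_{m,k}(A_i)=A_1\cdots A_{i-1}A_iA_{i-1}^{-1}\cdots A_1^{-1}$ for $1\le i\le m$, and $\phi_{m,k}(B_j)=A_1\cdots A_m(B_1\cdots B_j)A_{j-1}^{-1}\cdots A_1^{-1}$ for $1\le j\le k$. $\psi^{ab}$ denotes the automorphism induced on the abelianization, viewed as a matrix in $GL(m+k,\mathbb C)$. *)

(* Defs.v *)
From HB Require Import structures.
From mathcomp Require Import all_boot all_order all_algebra all_field.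
Set Implicit Arguments. Unset Strict Implicit. Unset Printing Implicit Defensive.
Import Order.TTheory GRing.Theory Num.Theory.
Local Open Scope ring_scope.

(* Words in the free group F(A_1..A_m, B_1..B_k): generators are encoded by
   natural numbers, A_i (1-indexed) |-> i-1 and B_j (1-indexed) |-> m + j - 1.
   A letter is (generator, inverted?). *)
Definition letter := (nat * bool)%type.
Definition word := seq letter.

Definition phi_word (m k : nat) (g : 'I_(m + k)) : word :=
  if (g < m)%N then
    let i := val g in
    [seq (a, false) | a <- iota 0 i] ++ [:: (i, false)]
      ++ [seq (a, true) | a <- rev (iota 0 i)]
  else
    let j := (val g - m)%N in
    [seq (a, false) | a <- iota 0 m] ++ [seq ((m + b)%N, false) | b <- iota 0 j.+1]
      ++ [seq (a, true) | a <- rev (iota 0 j)].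

(* image of a word in the abelianization Z^(m+k): exponent sums *)
Definition ab_word (n : nat) (w : word) : 'cV[int]_n :=
  \col_(g < n) \sum_(x <- w | x.1 == val g) (if x.2 then -1 else 1).

(* matrix of phi_{m,k}^ab in the basis A_1..A_m,B_1..B_k (column c = image of
   the c-th generator) *)
Definition phi_ab (m k : nat) : 'M[int]_(m + k) :=
  \matrix_(r, c) (ab_word (m + k) (phi_word c) r 0).

Definition phi_ab_C (m k : nat) : 'M[algC]_(m + k) := map_mx intr (phi_ab m k).

Definition jordan_block (n : nat) (a : algC) : 'M[algC]_n :=
  \matrix_(i, j) (if i == j then a else if (val j == (val i).+1)%N then 1 else 0).

Definition jordan_form_of (n : nat) (M : 'M[algC]_n) (r : nat)
  (s : 'I_r -> nat) (l : 'I_r -> algC) : Prop :=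
  exists (e : (\sum_(i < r) s i)%N = n) (P : 'M[algC]_n),
    P \in unitmx /\
    M = invmx P *m castmx (e, e) (\mxdiag_(i < r) jordan_block (s i) (l i)) *m P.

Definition largest_jordan_block (n : nat) (M : 'M[algC]_n) (b : nat) : Prop :=
  (exists r s l, @jordan_form_of n M r s l /\ (\max_(i < r) s i)%N = b) /\
  (forall r s l, @jordan_form_of n M r s l -> (\max_(i < r) s i)%N = b).

(* Main.v *)
Require Import Defs.
From HB Require Import structures.
From mathcomp Require Import all_boot all_order all_algebra all_field zify ring.
Set Implicit Arguments. Unset Strict Implicit. Unset Printing Implicit Defensive.
Import Order.TTheory GRing.Theory Num.Theory.
Local Open Scope ring_scope.



Lemma mxdiag_mul (p : nat) (p_ : 'I_p -> nat) (B C : forall i, 'M[algC]_(p_ i)) :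
  \mxdiag_i B i *m \mxdiag_i C i = \mxdiag_i (B i *m C i).
Proof.
rewrite {2}/mxdiag mul_mxdiag_mxblock /mxdiag; apply: eq_mxblock => i j.
case: eqP => [ij|nij]; last by rewrite mulmx0.
by subst j; rewrite !conform_mx_id.
Qed.

Lemma mxdiag_exp (p : nat) (p_ : 'I_p -> nat) (B : forall i, 'M[algC]_(p_ i)) q :
  (\mxdiag_i B i) ^+ q = \mxdiag_i (B i ^+ q).
Proof.
elim: q => [|q IH].
  by rewrite !expr0 -idmxE -(mxdiagZ (p_ := p_) 1); apply: eq_mxdiag => i; rewrite expr0 idmxE.
rewrite exprS IH -mulmxE mxdiag_mul; apply: eq_mxdiag => i; by rewrite exprS mulmxE.
Qed.

Lemma mxdiag_eq0 (p : nat) (p_ : 'I_p -> nat) (B : forall i, 'M[algC]_(p_ i)) :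
  (\mxdiag_i B i = 0) <-> (forall i, B i = 0).
Proof.
split => [h i|h]; last by rewrite -(mxdiag0 (p_ := p_)); apply: eq_mxdiag.
by rewrite -(submxblock_diag B i) h submxblock0.
Qed.

Definition shmx (s : nat) : 'M[algC]_s := \matrix_(i, j) ((val j == (val i).+1)%N)%:R.

Lemma jb_sh s : jordan_block s 1 - 1%:M = shmx s.
Proof.
apply/matrixP => i j; rewrite !mxE; case: (eqVneq i j) => [->|nij].
  by rewrite (ltn_eqF (ltnSn _)) subrr.
by rewrite subr0; case: ifP.
Qed.

Lemma sum_eqnat s (c : nat) : \sum_(u < s) ((val u == c)%N)%:R = ((c < s)%N)%:R :> algC.
Proof.
case: (ltnP c s) => hc.
  rewrite (bigD1 (Ordinal hc)) //= eqxx big1 ?addr0 // => u hu.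
  by case: eqP => // hv; case/eqP: hu; exact: val_inj.
by rewrite big1 // => u _; case: eqP => // hu; move: (ltn_ord u); rewrite hu ltnNge hc.
Qed.

Lemma shmx_exp s p : (shmx s) ^+ p = \matrix_(i, j) ((val j == val i + p)%N)%:R.
Proof.
elim: p => [|p IH].
  by apply/matrixP => i j; rewrite expr0 -idmxE !mxE addn0 -val_eqE eq_sym.
apply/matrixP => i j; rewrite exprSr -mulmxE IH !mxE.
under eq_bigr => u _ do rewrite !mxE.
transitivity (\sum_(u < s) ((val u == val i + p)%N)%:R * ((val j == (val i + p).+1)%N)%:R : algC).
  apply: eq_bigr => u _; case: (eqVneq (val u) (val i + p)) => [->//|h].
  by rewrite !mul0r.
rewrite -big_distrl /= sum_eqnat addnS.
case: eqP => [hj|]; last by rewrite mulr0.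
by have := ltn_ord j; rewrite hj => /ltnW ->; rewrite mulr1.
Qed.

Lemma shmx_exp_eq0 s p : ((shmx s) ^+ p == 0) = (s <= p)%N.
Proof.
rewrite shmx_exp; case: (leqP s p) => h.
  apply/eqP/matrixP => i j; rewrite !mxE; case: eqP => // hj.
  by move: (ltn_ord j); rewrite hj ltnNge (leq_trans h) // leq_addl.
apply/negP => /eqP/matrixP/(_ (Ordinal (leq_ltn_trans (leq0n p) h)) (Ordinal h)).
by rewrite !mxE /= add0n eqxx => /eqP; rewrite oner_eq0.
Qed.

Lemma detX_mx n (A : 'M[algC]_n) q : \det (A ^+ q) = \det A ^+ q.
Proof.
elim: q => [|q IH]; first by rewrite !expr0 -idmxE det1.
by rewrite !exprS -mulmxE det_mulmx IH.
Qed.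

Lemma jb_eig s a q : (0 < s)%N -> (jordan_block s a - 1%:M) ^+ q = 0 -> a = 1.
Proof.
case: s => // s _ h.
have hd : \det (jordan_block s.+1 a - 1%:M) = (a - 1) ^+ s.+1.
  rewrite -det_tr det_trig.
    rewrite (eq_bigr (fun _ => a - 1)) ?prodr_const ?card_ord // => i _.
    by rewrite !mxE eqxx.
  apply/is_trig_mxP => i j hij; rewrite !mxE.
  rewrite -val_eqE (gtn_eqF hij) (_ : (\val i == (\val j).+1) = false) ?subr0 //.
  by apply/negbTE; rewrite neq_ltn ltnS ltnW.
have : \det ((jordan_block s.+1 a - 1%:M) ^+ q) = 0 by rewrite h det0.
rewrite detX_mx hd -exprM => /eqP; rewrite expf_eq0 subr_eq0 => /andP[_ /eqP //].
Qed.

Lemma conj_exp n (P Q X : 'M[algC]_n) q :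
  Q *m P = 1%:M -> P *m Q = 1%:M -> (Q *m X *m P) ^+ q = Q *m X ^+ q *m P.
Proof.
move=> QP PQ; elim: q => [|q IH]; first by rewrite !expr0 -idmxE mulmx1 QP.
rewrite !exprS -!mulmxE IH !mulmxA -(mulmxA _ P Q) PQ mulmx1.
by rewrite -!mulmxA.
Qed.

Lemma mx0_eq0 p (X : 'M[algC]_p) : p = 0%N -> X = 0.
Proof. by move=> e; apply/matrixP => -[a ha]; exfalso; move: ha; rewrite e. Qed.

Lemma unique_max n (A : 'M[algC]_n) b :
  (A - 1%:M) ^+ b.+1 = 0 -> (A - 1%:M) ^+ b != 0 ->
  forall r s l, @jordan_form_of n A r s l -> (\max_(i < r) s i)%N = b.+1.
Proof.
move=> h1 h2 r s l [e [P [PU hA]]].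
subst n; rewrite castmx_id in hA.
set D := \mxdiag_i _ in hA.
have QP := mulVmx PU; have PQ := mulmxV PU.
have hAm : A - 1%:M = invmx P *m (D - 1%:M) *m P.
  by rewrite hA mulmxBr mulmxBl mulmx1 QP.
have hpow q : (A - 1%:M) ^+ q = invmx P *m (D - 1%:M) ^+ q *m P.
  by rewrite hAm conj_exp.
have hDpow q : (D - 1%:M) ^+ q = \mxdiag_i ((jordan_block (s i) (l i) - 1%:M) ^+ q).
  by rewrite /D -(mxdiagZ (p_ := s) 1) -mxdiagB mxdiag_exp.
have hD0 q : ((A - 1%:M) ^+ q == 0) = ((D - 1%:M) ^+ q == 0).
  apply/eqP/eqP => h; last by rewrite hpow h mulmx0 mul0mx.
  have : P *m (A - 1%:M) ^+ q *m invmx P = 0 by rewrite h mulmx0 mul0mx.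
  by rewrite hpow !mulmxA PQ mul1mx -mulmxA PQ mulmx1.
have hl i : (0 < s i)%N -> l i = 1.
  move=> hs; apply: (jb_eig (q := b.+1) hs).
  by move/eqP: h1; rewrite hD0 hDpow => /eqP /mxdiag_eq0; apply.
apply/eqP; rewrite eqn_leq; apply/andP; split.
  apply/bigmax_leqP => i _; case: (posnP (s i)) => [->//|hs].
  move/eqP: h1; rewrite hD0 hDpow => /eqP /mxdiag_eq0 /(_ i).
  by rewrite (hl i hs) jb_sh => /eqP; rewrite shmx_exp_eq0.
move: h2; rewrite hD0 hDpow.
case: (pickP (fun i => (jordan_block (s i) (l i) - 1%:M) ^+ b != 0)) => [i hi | hnone]; last first.
  by move=> /eqP[]; apply/mxdiag_eq0 => i; move: (hnone i) => /negbFE /eqP.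
move=> _; case: (posnP (s i)) => [hs|hs].
  by move: hi; rewrite (mx0_eq0 ((jordan_block (s i) (l i) - 1%:M) ^+ b) hs) eqxx.
move: hi; rewrite (hl i hs) jb_sh shmx_exp_eq0 -ltnNge => hi.
exact: leq_trans hi (leq_bigmax i).
Qed.



Lemma chain_jb n (A : 'M[algC]_n) p (f : nat -> 'rV_n) :
  (forall t, (t < p)%N -> f t *m (A - 1%:M) = if (t.+1 < p)%N then f t.+1 else 0) ->
  (\matrix_(t < p) f t) *m A = jordan_block p 1 *m \matrix_(t < p) f t.
Proof.
move=> hf; apply/row_matrixP => t.
rewrite !row_mul rowK.
have -> : f t *m A = f t + f t *m (A - 1%:M) by rewrite mulmxBr mulmx1 addrC subrK.
rewrite hf // mulmx_sum_row (bigD1 t) //= !mxE eqxx scale1r rowK.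
congr (_ + _).
case: ifP => ht.
  rewrite (bigD1 (Ordinal ht)) /=; last by rewrite -val_eqE /= neq_ltn ltnSn orbT.
  rewrite !mxE -val_eqE /= (ltn_eqF (ltnSn _)) eqxx scale1r rowK big1 ?addr0 // => u /andP[hu1 hu2].
  have e1 : (t == u) = false by apply/negbTE; rewrite eq_sym.
  have e2 : (val u == t.+1) = false.
    by apply/negbTE; apply: contra hu2 => /eqP hu; apply/eqP/val_inj.
  by rewrite !mxE e1 e2 scale0r.
apply/esym; rewrite big1 // => u hu.
have e1 : (t == u) = false by apply/negbTE; rewrite eq_sym.
have e2 : (val u == t.+1) = false.
  by apply/negbTE; apply/eqP => hu'; move: (ltn_ord u); rewrite hu' ht.
by rewrite !mxE e1 e2 scale0r.
Qed.

Lemma pow_big n (N : 'M[algC]_n) k q : N ^+ k.+1 = 0 -> (k.+1 <= q)%N -> N ^+ q = 0.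
Proof. by move=> h hq; rewrite -(subnKC hq) exprD h mul0r. Qed.

Lemma wpow n (N : 'M[algC]_n) (w : 'rV_n) a b : w *m N ^+ a *m N ^+ b = w *m N ^+ (a + b).
Proof. by rewrite exprD -mulmxE mulmxA. Qed.

Definition chmx n (N : 'M[algC]_n) k (w : 'rV_n) := \matrix_(t < k.+1) (w *m N ^+ t).

Lemma chain_indep n (N : 'M[algC]_n) k (w : 'rV_n) (x : 'rV_(k.+1)) q :
  N ^+ k.+1 = 0 -> w *m N ^+ k != 0 ->
  x *m chmx N k w *m N ^+ q = 0 -> forall t : 'I_k.+1, (t + q <= k)%N -> x 0 t = 0.
Proof.
move=> hN hw hx.
have key : forall t : 'I_k.+1, (t + q <= k)%N ->
    (forall u : 'I_k.+1, (u < t)%N -> x 0 u = 0) -> x 0 t = 0.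
  move=> t htq hlt.
  have : x *m chmx N k w *m N ^+ (k - t) = 0.
    have -> : (k - t = q + (k - t - q))%N by lia.
    by rewrite exprD -mulmxE mulmxA hx mul0mx.
  rewrite (mulmx_sum_row x) mulmx_suml (bigD1 t) //= big1 ?addr0.
    have ht : (t <= k)%N by rewrite -ltnS ltn_ord.
    rewrite rowK -scalemxAl wpow subnKC //.
    by move/eqP; rewrite scaler_eq0 (negPf hw) orbF => /eqP.
  move=> u hu; rewrite rowK -scalemxAl wpow.
  case: (ltngtP u t) => h.
  - by rewrite hlt // scale0r.
  - rewrite (pow_big hN) ?mulmx0 ?scaler0 //.
    have := ltn_ord t; lia.
  - by case/eqP: hu; apply: val_inj.
suff H : forall j (u : 'I_k.+1), (u < j)%N -> (u + q <= k)%N -> x 0 u = 0.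
  by move=> t ht; apply: (H t.+1).
elim=> // j IH u hu huq; case: (ltnP u j) => h; first exact: IH.
apply: (key u huq) => v hv; apply: IH.
  lia.
lia.
Qed.

Lemma exists_Z n p (X : 'M[algC]_(p, n)) r :
  \rank X = r -> exists Z : 'M_(r, n), (Z :=: X)%MS /\ row_free Z.
Proof. by move=> <-; exists (row_base X); split; [exact: eq_row_base | exact: row_base_free]. Qed.

Lemma rowfree_of n p (X : 'M[algC]_(p, n)) :
  (forall x : 'rV_p, x *m X = 0 -> x = 0) -> row_free X.
Proof.
move=> h; rewrite -kermx_eq0; apply/eqP/row_matrixP => i; rewrite row0; apply: h.
by apply/sub_kermxP; exact: row_sub.
Qed.

Lemma row1_mul n (a : 'rV[algC]_1) (f : nat -> 'rV_n) :
  a *m \matrix_(t < 1) f t = a 0 0 *: f 0%N.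
Proof. by rewrite mulmx_sum_row big_ord1 rowK. Qed.

Lemma exists_jordan n r k (A : 'M[algC]_n) :
  (k.+1 + r)%N = n -> (A - 1%:M) ^+ k.+1 = 0 -> (A - 1%:M) ^+ k != 0 ->
  (\rank (A - 1%:M)%R <= k)%N ->
  exists s l, @jordan_form_of n A r.+1 s l /\ (\max_(i < r.+1) s i)%N = k.+1.
Proof.
move=> hn hN hNk hrk.
set N := A - 1%:M in hN hNk hrk.
have [w hw] : exists w : 'rV_n, w *m N ^+ k != 0.
  case: (pickP (fun i : 'I_n => row i (N ^+ k) != 0)) => [i hi|h0].
    by exists (delta_mx 0 i); rewrite -rowE.
  case/eqP: hNk; apply/row_matrixP => i; rewrite row0; apply/eqP.
  by move: (h0 i) => /negbFE.
set Ch := chmx N k w.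
have Chfree : row_free Ch.
  apply: rowfree_of => x hx; apply/rowP => t; rewrite mxE.
  apply: (chain_indep (q := 0) hN hw); last by rewrite addn0 -ltnS ltn_ord.
  by rewrite expr0 -idmxE mulmx1 hx.
set v := w *m N ^+ k.
set K := kermx N.
have vK : (v <= K)%MS.
  by apply/sub_kermxP; rewrite /v -[N in _ *m N]expr1 wpow addn1 hN mulmx0.
have vCh : (v <= Ch)%MS.
  by rewrite /v (_ : w *m N ^+ k = row ord_max Ch) ?row_sub // rowK.
have capv : ((K :&: Ch) <= v)%MS.
  apply/row_subP => i; set y := row i (K :&: Ch)%MS.
  have yK : (y <= K)%MS := submx_trans (row_sub i _) (capmxSl _ _).
  have yCh : (y <= Ch)%MS := submx_trans (row_sub i _) (capmxSr _ _).
  case/submxP: yCh => x hy.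
  have hx : x *m Ch *m N ^+ 1 = 0 by rewrite expr1 -hy; apply/sub_kermxP.
  have hx0 := chain_indep hN hw hx.
  rewrite hy (mulmx_sum_row x) (bigD1 ord_max) //= big1 ?addr0.
    by rewrite rowK; apply: scalemx_sub; exact: submx_refl.
  move=> t ht; rewrite hx0 ?scale0r //.
  have : val t != k by apply: contra ht => /eqP e; apply/eqP/val_inj.
  by rewrite addn1 ltn_neqAle => ->; rewrite -ltnS ltn_ord.
have rv : \rank v = 1%N by rewrite rank_rV /v hw.
have rcap : \rank (K :&: Ch)%MS = 1%N.
  apply/eqP; rewrite eqn_leq; apply/andP; split; first by rewrite -rv mxrankS.
  by rewrite -rv mxrankS // sub_capmx vK vCh.
have rK : (r.+1 <= \rank K)%N by rewrite mxrank_ker; lia.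
have rCh : \rank Ch = k.+1 by apply/eqP.
have rdiff : \rank (K :\: Ch)%MS = r.
  have h1 := mxrank_cap_compl K Ch.
  have h2 := mxrank_disjoint_sum (capmx_diff K Ch).
  have h3 := rank_leq_col ((K :\: Ch) + Ch)%MS.
  lia.
have [Z [hZ Zfree]] := exists_Z rdiff.
have ZD : (Z <= K :\: Ch)%MS by rewrite hZ.
have ZK : (Z <= K)%MS by apply: submx_trans ZD (diffmxSl _ _).
have ZCh : forall u : 'rV_n, (u <= Z)%MS -> (u <= Ch)%MS -> u = 0.
  move=> u h1 h2; apply/eqP; rewrite -submx0 -(capmx_diff K Ch) sub_capmx h2 andbT.
  exact: submx_trans h1 ZD.
pose s := fun i : 'I_r.+1 => if val i == 0%N then k.+1 else 1%N.
pose l := fun _ : 'I_r.+1 => (1 : algC).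
pose g := fun (i : 'I_r.+1) (t : nat) => if val i == 0%N then w *m N ^+ t
  else oapp (fun j => row j Z) 0 (insub (val i).-1 : option 'I_r).
pose C := fun i : 'I_r.+1 => \matrix_(t < s i) g i t.
have e : (\sum_i s i)%N = n.
  by rewrite big_ord_recl /= (eq_bigr (fun _ => 1%N)) // sum1_card card_ord.
exists s, l; split; last first.
  apply/eqP; rewrite eqn_leq; apply/andP; split.
    by apply/bigmax_leqP => i _; rewrite /s; case: ifP.
  exact: (leq_bigmax (F := s) ord0).
clear hn hrk; subst n.
exists erefl; rewrite castmx_id.
set D := \mxdiag_i _.
set P := \mxcol_i C i.
have PA : P *m A = D *m P.
  rewrite mxcol_mul mul_mxdiag_mxcol; apply: eq_mxcol => i; apply: chain_jb => t ht.
  rewrite /g; move: ht; rewrite /s; case: ifP => hi ht.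
    rewrite -[N in _ *m N]expr1 wpow addn1; case: ifP => // htk.
    move/negbT: htk; rewrite -leqNgt => htk.
    by rewrite (pow_big hN htk) mulmx0.
  rewrite /=; case: (insub _) => [j|]; last by rewrite mul0mx.
  by apply/sub_kermxP; exact: submx_trans (row_sub j Z) ZK.
have PU : P \in unitmx.
  rewrite -row_free_unit; apply: rowfree_of => x hx.
  rewrite -(submxrowK x) mul_mxrow_mxcol in hx.
  rewrite [\sum_(i < r.+1) (_ *m _)]big_ord_recl in hx.
  set x0 := submxrow x ord0 in hx.
  pose y : 'rV_r := \row_j (submxrow x (lift ord0 j) 0 0).
  have hsum : \sum_(j < r) submxrow x (lift ord0 j) *m C (lift ord0 j) = y *m Z.
    rewrite (mulmx_sum_row y); apply: eq_bigr => j _.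
    rewrite (row1_mul (submxrow x (lift ord0 j)) (g (lift ord0 j))) /g /= add0n valK /=.
    by rewrite [y 0 j]mxE.
  rewrite hsum in hx.
  have h1 : x0 *m Ch = - (y *m Z) by apply/eqP; rewrite -addr_eq0; apply/eqP.
  have h2 : x0 *m Ch = 0.
    by apply: ZCh; [rewrite h1 eqmx_opp submxMl | exact: submxMl].
  have hx0 : x0 = 0 by apply/eqP; rewrite -(mulmx_free_eq0 _ Chfree) h2.
  have hy : y = 0.
    by apply/eqP; rewrite -(mulmx_free_eq0 _ Zfree) -oppr_eq0 -h1 h2.
  rewrite -(submxrowK x) -[RHS](mxrow0 (q_ := s)); apply: eq_mxrow => i.
  case: (unliftP ord0 i) => [j|] ->; last exact: hx0.
  have hj : y 0 j = 0 by rewrite hy mxE.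
  rewrite [y 0 j]mxE in hj.
  apply/rowP => -[[|t] ht] //; rewrite [RHS]mxE -hj; congr (_ _ _); exact: val_inj.
exists P; split => //.
by rewrite -mulmxA -PA mulmxA mulVmx // mul1mx.
Qed.



Lemma sum_letters (s : seq nat) (b : bool) (f : nat -> nat) r :
  \sum_(x <- [seq (f a, b) | a <- s] | x.1 == r) (if x.2 then -1 else 1 : int)
  = (if b then -1 else 1) * (count (fun a => f a == r) s)%:R.
Proof.
elim: s => [|a s IH]; first by rewrite big_nil mulr0.
rewrite /= big_cons /= IH; case: eqP => _ /=; last by rewrite add0n.
by rewrite natrD mulrDr mulr1.
Qed.

Lemma count_iota_eq (a0 len r : nat) :
  count (fun a => a == r) (iota a0 len) = (a0 <= r < a0 + len)%N.
Proof. by have := count_uniq_mem r (iota_uniq a0 len); rewrite mem_iota. Qed.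

Lemma count_iota_add (m len r : nat) :
  count (fun a => m + a == r)%N (iota 0 len) = (m <= r < m + len)%N.
Proof.
rewrite -(count_map (addn m) (fun a => a == r)) -iotaDl addn0.
exact: count_iota_eq.
Qed.

Lemma phiE m k (r c : 'I_(m + k)) :
  phi_ab m k r c = (if (c < m)%N then ((r == c :> nat) : nat)%:R
     else (((r < m)%N : nat) + ((m <= r < m + (c - m).+1)%N : nat))%:R - (((r < c - m)%N : nat))%:R).
Proof.
rewrite !mxE /phi_word; case: ifP => hc.
  rewrite !big_cat /= !sum_letters big_cons big_nil /= count_rev.
  rewrite (count_iota_eq 0 c r) eq_sym; case: eqP => _; rewrite /=. 
  - ring.
  - ring.
rewrite !big_cat !sum_letters count_rev count_iota_add.
rewrite (count_iota_eq 0 m r) (count_iota_eq 0 (c - m) r) /= !add0n.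
ring.
Qed.

Lemma NE m k (hkm : (k <= m)%N) (r c : 'I_(m + k)) :
  (phi_ab_C m k - 1%:M) r c =
  ((m <= c)%N && (if (r < m)%N then (c - m <= r)%N else (r < c)%N))%:R.
Proof.
have hr := ltn_ord r; have hc' := ltn_ord c.
have -> : (phi_ab_C m k - 1%:M) r c = (phi_ab m k r c)%:~R - (nat_of_ord r == nat_of_ord c)%:R.
  by rewrite !mxE.
rewrite phiE; case: ifP => hc.
  rewrite (_ : (m <= c)%N = false) ?rmorph_nat ?subrr //; lia.
rewrite rmorphB !rmorph_nat /= (_ : (m <= c)%N = true); last by lia.
case: (ltnP r m) => hrm /=.
  rewrite (_ : (nat_of_ord r == nat_of_ord c) = false) /=; last by lia.
  case: (leqP (c - m) r) => h.
    by rewrite addn0 !subr0.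
  by rewrite addn0 subrr subr0.
have e0 : (r < c - m)%N = false by lia.
rewrite e0 subr0 add0n.
case: (ltnP r c) => h.
  have e1 : (r < m + (c - m).+1)%N = true by lia.
  have e2 : (nat_of_ord r == nat_of_ord c) = false by lia.
  by rewrite e1 e2 subr0.
have e1 : (r < m + (c - m).+1)%N = (nat_of_ord r == nat_of_ord c) by lia.
by rewrite e1; case: (nat_of_ord r == nat_of_ord c); rewrite ?subrr ?subr0.
Qed.

Lemma graded_zero n (N : 'M[algC]_n) (h : 'I_n -> nat) :
  (forall i j, N i j != 0 -> (h i < h j)%N) ->
  forall p i j, (h j < h i + p)%N -> (N ^+ p) i j = 0.
Proof.
move=> hN; elim=> [|p IH] i j hij.
  rewrite expr0 -idmxE mxE; case: eqP => // eij.
  by subst; rewrite addn0 ltnn in hij.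
rewrite exprS -mulmxE mxE big1 // => u _.
case: (eqVneq (N i u) 0) => [->|hu]; first by rewrite mul0r.
have := hN i u hu => hiu.
by rewrite IH ?mulr0 //; lia.
Qed.

Lemma sum_pick n (F : 'I_n -> algC) (c : nat) (hc : (c < n)%N) :
  \sum_u F u * ((nat_of_ord u == c) : nat)%:R = F (Ordinal hc).
Proof.
rewrite (bigD1 (Ordinal hc)) //= eqxx mulr1 big1 ?addr0 // => u hu.
case: eqP => [e|]; last by rewrite mulr0.
by case/eqP: hu; apply: val_inj.
Qed.

Definition hgt m k (i : 'I_(m + k)) : nat := if (i < m)%N then 0%N else (i - m + 1)%N.

Lemma Nheight m k (hkm : (k <= m)%N) (i j : 'I_(m + k)) :
  (phi_ab_C m k - 1%:M) i j != 0 -> (hgt i < hgt j)%N.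
Proof.
rewrite NE // /hgt.
case: (leqP m j) => hjm /=; last by rewrite mulr0n eqxx.
case: (ltnP i m) => hi; case: (ltnP j m) => hj' //=; try lia.
by case: (ltnP i j) => h; [lia | rewrite mulr0n eqxx].
Qed.

Lemma Npow_top m k (hkm : (k <= m)%N) : (phi_ab_C m k - 1%:M) ^+ k.+1 = 0.
Proof.
apply/matrixP => i j; rewrite mxE (graded_zero (@Nheight m k hkm)) //.
have : (hgt j <= k)%N by rewrite /hgt; case: ifP => hh; have := ltn_ord j; lia.
lia.
Qed.

Lemma Npow_k m k (hk : (1 <= k)%N) (hkm : (k <= m)%N) : (phi_ab_C m k - 1%:M) ^+ k != 0.
Proof.
set N := phi_ab_C m k - 1%:M.
have hc0 : (m + k - 1 < m + k)%N by lia.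
pose c0 := Ordinal hc0.
have P : forall t, (t < k)%N -> forall i : 'I_(m + k), (k - t <= hgt i)%N ->
    (N ^+ t) i c0 = ((nat_of_ord i == m + k - 1 - t)%N : nat)%:R.
  elim=> [|t IH] ht i hi.
    by rewrite expr0 -idmxE mxE subn0.
  rewrite exprS -mulmxE mxE.
  have hct : (m + k - 1 - t < m + k)%N by lia.
  transitivity (\sum_u N i u * ((nat_of_ord u == m + k - 1 - t)%N : nat)%:R).
    apply: eq_bigr => u _.
    case: (eqVneq (N i u) 0) => [->|hu]; first by rewrite !mul0r.
    have := Nheight hkm hu => hiu.
    by rewrite IH //; lia.
  rewrite (sum_pick _ hct) /N NE //=.
  move: hi; rewrite /hgt; case: ifP => hi; first by lia.
  move=> hi'.
  have -> : (m <= m + k - 1 - t)%N = true by lia.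
  by have -> : (i < m + k - 1 - t)%N = (nat_of_ord i == m + k - 1 - t.+1)%N by lia.
have hi0 : (0 < m + k)%N by lia.
have hm : (m < m + k)%N by lia.
have hk1 : k = k.-1.+1 by lia.
have one : (N ^+ k.-1.+1) (Ordinal hi0) c0 = 1.
  rewrite exprS -mulmxE mxE.
  transitivity (\sum_u N (Ordinal hi0) u * ((nat_of_ord u == m)%N : nat)%:R).
    apply: eq_bigr => u _.
    case: (eqVneq (N (Ordinal hi0) u) 0) => [->|hu]; first by rewrite !mul0r.
    have := Nheight hkm hu => hiu.
    rewrite P; [|lia|by move: hiu; rewrite /hgt /=; lia].
    by have -> : (m + k - 1 - k.-1 = m)%N by lia.
  rewrite (sum_pick _ hm) /N NE //= leqnn subnn.
  have h0m : (0 < m)%N by lia.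
  by rewrite h0m.
rewrite -hk1 in one.
apply/negP => /eqP h0; move: one; rewrite h0 mxE => /eqP; rewrite eq_sym oner_eq0.
by [].
Qed.



Lemma Nrank m k (hkm : (k <= m)%N) : (\rank (phi_ab_C m k - 1%:M)%R <= k)%N.
Proof.
set N := phi_ab_C m k - 1%:M.
have hN : N = rsubmx N *m row_mx (0 : 'M_(k, m)) 1%:M.
  rewrite mul_mx_row mulmx0 mulmx1 -[LHS]hsubmxK; congr row_mx.
  apply/matrixP => i j; rewrite [LHS]mxE /N NE // [RHS]mxE /=.
  by rewrite leqNgt ltn_ord.
rewrite hN; exact: leq_trans (mxrankM_maxr _ _) (rank_leq_row _).
Qed.

Lemma unit_of_nil n (N : 'M[algC]_n) q : N ^+ q = 0 -> (N + 1%:M) \in unitmx.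
Proof.
move=> hq.
have key : forall p, (1 + N) * \sum_(i < p) (- N) ^+ i = 1 - (- N) ^+ p.
  elim=> [|p IH]; first by rewrite big_ord0 mulr0 expr0 subrr.
  rewrite big_ord_recr /= mulrDr IH mulrDl mul1r exprS mulNr opprK addrA subrK.
  done.
have := key q; rewrite exprNn hq mulr0 subr0 => h.
have [] := @mulmx1_unit _ _ (N + 1%:M) (\sum_(i < q) (- N) ^+ i) => //.
by rewrite mulmxE idmxE addrC.
Qed.

Lemma inv_facts n (A : 'M[algC]_n) k : A \in unitmx ->
  (A - 1%:M) ^+ k.+1 = 0 -> (A - 1%:M) ^+ k != 0 ->
  [/\ (invmx A - 1%:M) ^+ k.+1 = 0, (invmx A - 1%:M) ^+ k != 0 &
      (\rank (invmx A - 1%:M)%R <= \rank (A - 1%:M)%R)%N].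
Proof.
move=> hA hN0 hNk.
set Ai := invmx A; set N := A - 1%:M in hN0 hNk *.
have AAi : A * Ai = 1 by rewrite -mulmxE mulmxV // idmxE.
have AiA : Ai * A = 1 by rewrite -mulmxE mulVmx // idmxE.
have hN' : Ai - 1%:M = - N * Ai.
  by rewrite /N idmxE mulNr mulrBl AAi mul1r opprB.
have hcomm : GRing.comm (- N) Ai.
  by rewrite /GRing.comm mulNr mulrN /N idmxE mulrBl mulrBr AAi AiA mul1r mulr1.
have hpow p : (Ai - 1%:M) ^+ p = (- N) ^+ p * Ai ^+ p by rewrite hN' exprMn_comm.
split.
- by rewrite hpow exprNn hN0 mulr0 mul0r.
- apply: contra hNk => /eqP h.
  have : (- N) ^+ k * Ai ^+ k * A ^+ k = 0 by rewrite -hpow h mul0r.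
  rewrite -mulrA -exprMn_comm; last by rewrite /GRing.comm AiA AAi.
  rewrite AiA expr1n mulr1 => h'.
  by apply/eqP; rewrite -[N]opprK exprNn h' mulr0.
- by rewrite hN' mulNr mxrank_opp -mulmxE; exact: mxrankM_maxl.
Qed.

Lemma largest_of n (A : 'M[algC]_n) k r : (k.+1 + r)%N = n ->
  (A - 1%:M) ^+ k.+1 = 0 -> (A - 1%:M) ^+ k != 0 ->
  (\rank (A - 1%:M)%R <= k)%N -> largest_jordan_block A k.+1.
Proof.
move=> hn h1 h2 h3; split; last exact: unique_max h1 h2.
by have [s [l [hj hm]]] := exists_jordan hn h1 h2 h3; exists r.+1, s, l.
Qed.

Theorem claim8p13 (m k : nat) (hk : (1 <= k)%N) (hkm : (k <= m)%N) :
  largest_jordan_block (phi_ab_C m k) k.+1 /\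
  largest_jordan_block (invmx (phi_ab_C m k)) k.+1.
Proof.
have hn : (k.+1 + (m - 1))%N = (m + k)%N by lia.
have hN1 := Npow_top hkm; have hNk := Npow_k hk hkm; have hr := Nrank hkm.
have hU : phi_ab_C m k \in unitmx by have := unit_of_nil hN1; rewrite subrK.
split; first exact: largest_of hn hN1 hNk hr.
have [h1 h2 h3] := inv_facts hU hN1 hNk.
exact: largest_of hn h1 h2 (leq_trans h3 hr).
Qed.
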